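(* Let $\mathbb S$ be the free semigroup action on the compact metric space $X$ generated by continuous maps $g_1,\dots,g_p$. Then the set $E^f_p(X,\mathbb S)$ of full entropy points of $\mathbb S$ is nonempty.
   Context: Setting: $(X,d)$ compact metric space, $g_1,\dots,g_p:X\to X$ continuous; $G_n^*$ the set of words $\underline g=g_{i_n}\cdots g_{i_1}$, $i_j\in\{1,\dots,p\}$; $d_{\underline g}(x,y)=\max_{0\le j\le n}d(g_{i_j}\cdots g_{i_1}x,g_{i_j}\cdots g_{i_1}y)$; $s(K,\underline g,\varepsilon)$ the maximal cardinality of a $(\underline g,\varepsilon)$-separated subset of $K$; $h_{top}(K,\mathbb S)=\lim_{\varepsilon\to0}\limsup_n\frac1n\log\big(p^{-n}\sum_{\underline g\in G_n^*}s(K,\underline g,\varepsilon)\big)$. A point $x_0$ is a full entropy point if $h_{top}(K,\mathbb S)=h_{top}(X,\mathbb S)$ for every closed neighbourhood $K$ of $x_0$. *)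

(* Defs.v *)
From HB Require Import structures.
From mathcomp Require Import all_boot all_order all_algebra.
From mathcomp Require Import all_classical all_reals all_analysis.
Set Implicit Arguments. Unset Strict Implicit. Unset Printing Implicit Defensive.
Import Order.TTheory GRing.Theory Num.Theory.
Local Open Scope classical_set_scope.
Local Open Scope ring_scope.

Section Defs.
Variables (R : realType) (X : Type) (d : X -> X -> R).

Definition is_metric : Prop :=
  [/\ forall x y, 0 <= d x y, forall x y, d x y = 0 <-> x = y,
      forall x y, d x y = d y x & forall x y z, d x z <= d x y + d y z].

Definition dball (x : X) (r : R) : set X := [set y | d x y < r].

Definition dopen (U : set X) : Prop :=
  forall x, U x -> exists2 r : R, 0 < r & dball x r `<=` U.

Definition dclosed (K : set X) : Prop := dopen (~` K).

Definition dcompact_space : Prop :=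
  forall (I : Type) (U : I -> set X), (forall i, dopen (U i)) ->
    (forall x, exists i, U i x) ->
    exists (m : nat) (f : 'I_m -> I), forall x, exists k, U (f k) x.

Definition dcontinuous (f : X -> X) : Prop :=
  forall x (e : R), 0 < e -> exists2 del : R, 0 < del &
    forall y, d x y < del -> d (f x) (f y) < e.

Definition closed_nbhd (x0 : X) (K : set X) : Prop :=
  dclosed K /\ exists U, [/\ dopen U, U x0 & U `<=` K].

Variables (p : nat) (g : 'I_p -> X -> X).

(* a word g_{i_n} ... g_{i_1} is encoded by the tuple (i_1, ..., i_n);
   word_orbit w j x = g_{i_j} ... g_{i_1} x  (j = 0 gives x) *)
Definition word_orbit n (w : n.-tuple 'I_p) (j : nat) (x : X) : X :=
  foldl (fun y i => g i y) x (take j w).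

Definition dword n (w : n.-tuple 'I_p) (x y : X) : R :=
  \big[Num.max/0]_(j < n.+1) d (word_orbit w j x) (word_orbit w j y).

(* E (a finite list of points, listed without repetition since distinct
   entries are at d_w-distance > eps >= 0) is a (w,eps)-separated subset of K *)
Definition separated n (K : set X) (w : n.-tuple 'I_p) (eps : R) (E : seq X) :=
  (forall (x0 : X) (i : nat), (i < size E)%N -> K (nth x0 E i)) /\ pairwise (fun x y => eps < dword w x y) E.

Local Open Scope ereal_scope.

Definition sep_card n (K : set X) (w : n.-tuple 'I_p) (eps : R) : \bar R :=
  ereal_sup [set (size E)%:R%:E | E in [set E | separated K w eps E]].

Definition entropy_term (K : set X) (eps : R) (n : nat) : \bar R :=
  ((n%:R)^-1)%:E * lne (((p%:R ^+ n)^-1)%:E *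
                        \sum_(w : n.-tuple 'I_p) sep_card K w eps).

Definition entropy_eps (K : set X) (eps : R) : \bar R :=
  limn_esup (entropy_term K eps).

Definition is_htop (K : set X) (h : \bar R) : Prop :=
  entropy_eps K @ 0^'+ --> h.

Definition full_entropy_point (x0 : X) : Prop :=
  forall K, closed_nbhd x0 K ->
    exists h : \bar R, is_htop K h /\ is_htop setT h.

End Defs.

(* Main.v *)
Require Import Defs.
From HB Require Import structures.
From mathcomp Require Import all_boot all_order all_algebra.
From mathcomp Require Import all_classical all_reals all_analysis.
Import Order.TTheory GRing.Theory Num.Theory.
Local Open Scope classical_set_scope.
Local Open Scope ring_scope.
Module MA.
Set Implicit Arguments. Unset Strict Implicit.

Lemma nth_filterP (T : Type) (a : pred T) (E : seq T) x0 i :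
  (i < size (seq.filter a E))%N -> a (nth x0 (seq.filter a E) i) /\
  exists2 j, (j < size E)%N & nth x0 (seq.filter a E) i = nth x0 E j.
Proof.
elim: E i => [|x E IH] i //=.
case: ifP => ax.
  case: i => [|i] /= Hi; first by split => //; exists 0%N.
  have [H1 [j Hj Ej]] := IH i Hi; split => //; by exists j.+1.
move=> Hi; have [H1 [j Hj Ej]] := IH i Hi; split => //; by exists j.+1.
Qed.

Section S.
Variables (R : realType) (X : Type) (d : X -> X -> R) (p : nat) (g : 'I_p -> X -> X).
Local Open Scope ereal_scope.

Lemma separated_nil n (K : set X) (w : n.-tuple 'I_p) e : Defs.separated d g K w e [::].
Proof. by split. Qed.

Lemma sep_card_ge0 n (K : set X) (w : n.-tuple 'I_p) e : 0 <= sep_card d g K w e.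
Proof.
apply: ereal_sup_ubound; exists [::]; first exact: separated_nil. by [].
Qed.

Lemma sep_card_mono n (K1 K2 : set X) (w : n.-tuple 'I_p) e1 e2 :
  K1 `<=` K2 -> (e2 <= e1)%R -> sep_card d g K1 w e1 <= sep_card d g K2 w e2.
Proof.
move=> KK ee; apply: ereal_sup_le => _ [E [HK Hp] <-]; exists E => //; split.
  by move=> x0 i Hi; apply: KK; apply: HK.
by apply: sub_pairwise Hp => x y /=; apply: le_lt_trans.
Qed.

Lemma sep_card_union n (A B : set X) (w : n.-tuple 'I_p) e :
  sep_card d g (A `|` B) w e <= sep_card d g A w e + sep_card d g B w e.
Proof.
apply: ge_ereal_sup => _ [E [HK Hp] <-].
pose a := fun x => `[< A x >].
have -> : size E = (size (seq.filter a E) + size (seq.filter (predC a) E))%N.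
  by rewrite !size_filter count_predC.
rewrite natrD EFinD; apply: leeD; apply: ereal_sup_ubound.
  exists (seq.filter a E) => //; split; last exact: seq.pairwise_filter.
  move=> x0 i Hi; have [H1 _] := nth_filterP x0 Hi; exact/asboolP.
exists (seq.filter (predC a) E) => //; split; last exact: seq.pairwise_filter.
move=> x0 i Hi; have [H1 [j Hj Ej]] := nth_filterP x0 Hi; rewrite Ej.
move: H1; rewrite Ej /= /a => /asboolPn nA.
by case: (HK x0 j Hj).
Qed.
End S.

End MA.
Import MA.

Module MB.
Set Implicit Arguments. Unset Strict Implicit.

Section LS.
Variable R : realType.
Local Open Scope ereal_scope.
Implicit Types u v w : nat -> \bar R.

Lemma LS1 u : limn_esup u = ereal_inf (range (esups u)).
Proof. by rewrite limn_esup_lim; apply/cvg_lim => //; exact: cvg_esups_inf. Qed.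

Lemma LS_le u N : limn_esup u <= esups u N.
Proof. by rewrite LS1; apply: ereal_inf_lbound; exists N. Qed.

Lemma esups_ub u N k : (N <= k)%N -> u k <= esups u N.
Proof. by move=> Nk; apply: ereal_sup_ubound; exists k. Qed.

Lemma LSmain w u v :
  (forall e : R, (0 < e)%R -> exists N0, forall n, (N0 <= n)%N ->
     w n <= e%:E + maxe (u n) (v n)) ->
  limn_esup w <= maxe (limn_esup u) (limn_esup v).
Proof.
move=> H; apply/lee_addgt0Pr => e e0.
rewrite leNgt; apply/negP => Hlt.
have [N0 HN0] := H e e0.
set L := limn_esup w in Hlt.
have Ha : limn_esup u < L - e%:E.
  by rewrite lteBrDr //; apply: le_lt_trans Hlt; rewrite leeD2r // le_max lexx.
have Hb : limn_esup v < L - e%:E.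
  by rewrite lteBrDr //; apply: le_lt_trans Hlt; rewrite leeD2r // le_max lexx orbT.
rewrite LS1 in Ha; rewrite LS1 in Hb.
have [_ [N _ <-] HN] := ereal_inf_lt Ha.
have [_ [M _ <-] HM] := ereal_inf_lt Hb.
pose K := maxn (maxn N M) N0.
have : L <= e%:E + maxe (esups u N) (esups v M).
  apply: le_trans (LS_le w K) _.
  apply: ge_ereal_sup => _ [k /= Kk <-].
  apply: le_trans (HN0 k _) _; first by apply: leq_trans Kk; rewrite /K leq_maxr.
  apply: leeD2l; rewrite ge_max; apply/andP; split; rewrite le_max; apply/orP.
    left; apply: esups_ub; apply: leq_trans Kk; rewrite /K; 
    by apply: leq_trans (leq_maxl _ _); apply: leq_maxl.
  right; apply: esups_ub; apply: leq_trans Kk; rewrite /K;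
  by apply: leq_trans (leq_maxl _ _); apply: leq_maxr.
apply/negP; rewrite -ltNge.
have : maxe (esups u N) (esups v M) < L - e%:E by rewrite gt_max HN HM.
by rewrite lteBrDl // addeC.
Qed.

Lemma LSmono u v N0 : (forall n, (N0 <= n)%N -> u n <= v n) ->
  limn_esup u <= limn_esup v.
Proof.
move=> H; rewrite [X in _ <= X]LS1; apply: le_ereal_inf_tmp => _ [N _ <-].
apply: le_trans (LS_le u (maxn N N0)) _.
apply: ge_ereal_sup => _ [k /= Kk <-].
apply: le_trans (H k _) _; first by apply: leq_trans Kk; apply: leq_maxr.
apply: esups_ub; apply: leq_trans Kk; apply: leq_maxl.
Qed.

End LS.

End MB.
Import MB.

Module MC.
Set Implicit Arguments. Unset Strict Implicit.

Section E.
Variables (R : realType) (X : Type) (d : X -> X -> R) (p : nat) (g : 'I_p -> X -> X).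
Local Open Scope ereal_scope.

Lemma lne_mono (x y : \bar R) : x <= y -> lne x <= lne y.
Proof.
move=> xy; have [x0|x0] := leP x 0; first by rewrite le0_lneNy // leNye.
have y0 : 0 <= y by apply: le_trans xy; apply: ltW.
by rewrite lee_lne // in_itv /= leey andbT // ltW.
Qed.

Lemma lne_2M (y : \bar R) : 0 <= y -> lne (2%:E * y) = (ln 2)%:E + lne y.
Proof.
rewrite le_eqVlt => /predU1P[<-|y0].
  by rewrite mule0 le0_lneNy // addeNy.
rewrite lneM ?lne_EFin // in_itv /= leey ?andbT //.
Qed.

Definition Ssum (K : set X) (e : R) n :=
  \sum_(w : n.-tuple 'I_p) sep_card d g K w e.

Lemma Ssum_ge0 K e n : 0 <= Ssum K e n.
Proof. by apply: sume_ge0 => w _; apply: sep_card_ge0. Qed.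

Lemma term_mono (K1 K2 : set X) (e1 e2 : R) n : K1 `<=` K2 -> (e2 <= e1)%R ->
  entropy_term d g K1 e1 n <= entropy_term d g K2 e2 n.
Proof.
move=> KK ee; rewrite /entropy_term; apply: lee_wpmul2l.
  by rewrite lee_fin invr_ge0.
apply: lne_mono; apply: lee_wpmul2l; first by rewrite lee_fin invr_ge0 exprn_ge0.
by apply: lee_sum => w _; apply: sep_card_mono.
Qed.

Lemma term_union (A B : set X) (e : R) n : (0 < n)%N ->
  entropy_term d g (A `|` B) e n <=
    (ln 2 / n%:R)%:E + maxe (entropy_term d g A e n) (entropy_term d g B e n).
Proof.
move=> n0; rewrite /entropy_term.
set c := ((p%:R ^+ n)^-1)%R.
have c0 : (0 <= c)%R by rewrite invr_ge0 exprn_ge0.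
set a := c%:E * Ssum A e n.
set b := c%:E * Ssum B e n.
have a0 : 0 <= a by apply: mule_ge0; rewrite ?lee_fin // Ssum_ge0.
have b0 : 0 <= b by apply: mule_ge0; rewrite ?lee_fin // Ssum_ge0.
have H1 : c%:E * Ssum (A `|` B) e n <= a + b.
  rewrite /a /b -ge0_muleDr ?Ssum_ge0 //; apply: lee_wpmul2l; first by rewrite lee_fin.
  by rewrite /Ssum -big_split /=; apply: lee_sum => w _; apply: sep_card_union.
have ni0 : (0 <= (n%:R)^-1 :> R)%R by rewrite invr_ge0.
have key : forall z, 0 <= z -> a + b <= 2%:E * z -> 
   ((n%:R)^-1)%:E * lne (c%:E * Ssum (A `|` B) e n) <=
   (ln 2 / n%:R)%:E + ((n%:R)^-1)%:E * lne z.
  move=> z z0 abz.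
  apply: le_trans (lee_wpmul2l _ (lne_mono (le_trans H1 abz))) _; first by rewrite lee_fin.
  rewrite lne_2M // muleDr // ?fin_num_adde_defr //.
  by rewrite -EFinM mulrC.
have [ab|ba] := leP a b.
  apply: le_trans (key b b0 _) _.
    rewrite -[2%R]/(1 + 1)%R EFinD ge0_muleDl ?lee_fin // mul1e.
    by apply: leeD2r.
  by apply: leeD2l; rewrite le_max lexx orbT.
apply: le_trans (key a a0 _) _.
  rewrite -[2%R]/(1 + 1)%R EFinD ge0_muleDl ?lee_fin // mul1e.
  by apply: leeD2l; apply: ltW.
by apply: leeD2l; rewrite le_max lexx.
Qed.

End E.

End MC.
Import MC.

Module MD.
Set Implicit Arguments. Unset Strict Implicit.

Section F.
Variables (R : realType) (X : Type) (d : X -> X -> R) (p : nat) (g : 'I_p -> X -> X).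
Local Open Scope ereal_scope.

Lemma eps_mono (K1 K2 : set X) (e1 e2 : R) : K1 `<=` K2 -> (e2 <= e1)%R ->
  entropy_eps d g K1 e1 <= entropy_eps d g K2 e2.
Proof. by move=> KK ee; apply: (@LSmono _ _ _ 0%N) => n _; apply: term_mono. Qed.

Lemma eps_union (A B : set X) (e : R) :
  entropy_eps d g (A `|` B) e <= maxe (entropy_eps d g A e) (entropy_eps d g B e).
Proof.
apply: LSmain => e' e'0.
exists (Num.truncn (ln 2 / e')).+1 => n Nn.
have n0 : (0 < n)%N by apply: leq_trans Nn.
apply: le_trans (@term_union R X d p g A B e n n0) _.
apply: leeD2r; rewrite lee_fin ler_pdivrMr ?ltr0n //.
have : (ln 2 / e' < n%:R)%R by apply: lt_le_trans (truncnS_gt _) _; rewrite ler_nat.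
by rewrite ltr_pdivrMr // mulrC => h; apply: ltW.
Qed.

Definition H (K : set X) : \bar R :=
  ereal_sup (entropy_eps d g K @` [set` `]0%R, +oo[]).

Lemma htop (K : set X) : is_htop d g K (H K).
Proof.
rewrite /is_htop /H.
apply: nonincreasing_at_right_cvge; first by [].
move=> x y; rewrite !in_itv /= !andbT => x0 y0 xy.
by apply: eps_mono.
Qed.

Lemma H_mono (K1 K2 : set X) : K1 `<=` K2 -> H K1 <= H K2.
Proof.
move=> KK; apply: ge_ereal_sup => _ [e e0 <-].
apply: le_trans (eps_mono KK (lexx e)) _.
by apply: ereal_sup_ubound; exists e.
Qed.

Lemma H_union (A B : set X) : H (A `|` B) <= maxe (H A) (H B).
Proof.
apply: ge_ereal_sup => _ [e e0 <-].
apply: le_trans (eps_union A B e) _.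
rewrite ge_max; apply/andP; split; rewrite le_max; apply/orP; [left|right];
  by apply: ereal_sup_ubound; exists e.
Qed.

End F.

End MD.
Import MD.

Module ME.
Set Implicit Arguments. Unset Strict Implicit.

Section G.
Variables (R : realType) (X : Type) (d : X -> X -> R) (p : nat) (g : 'I_p -> X -> X).

Lemma H_big m (F : 'I_m.+1 -> set X) (c : \bar R) :
  (forall k, (H d g (F k) < c)%E) -> (H d g [set x | exists k, F k x] < c)%E.
Proof.
elim: m F => [|m IH] F HF.
  apply: le_lt_trans (HF ord0); apply: H_mono => x [k Hk].
  by rewrite (ord1 k) in Hk.
have Hs : [set x | exists k, F k x] `<=`
    F ord0 `|` [set x | exists k : 'I_m.+1, F (lift ord0 k) x].
  move=> x [k Hk]; case: (unliftP ord0 k) => [k' Ek|Ek]; subst k.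
    by right; exists k'.
  by left.
apply: le_lt_trans (H_mono d g Hs) _.
apply: le_lt_trans (H_union d g _ _) _.
rewrite gt_max HF /=; apply: IH => k; apply: HF.
Qed.

Lemma dball_open (x : X) (r : R) : is_metric d -> dopen d (dball d x r).
Proof.
move=> [d0 dE dS dT] y Hy; exists (r - d x y); first by rewrite subr_gt0.
move=> z Hz; rewrite /dball /= in Hy Hz *.
apply: le_lt_trans (dT x y z) _; by rewrite -ltrBrDl.
Qed.

End G.

End ME.
Import ME.

Theorem mainTheorem7 (R : realType) (X : Type) (d : X -> X -> R)
  (p : nat) (g : 'I_p -> X -> X) :
  is_metric d -> dcompact_space d -> (exists x : X, True) -> (0 < p)%N ->
  (forall i, dcontinuous d (g i)) ->
  exists x0 : X, full_entropy_point d g x0.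
Proof.
move=> Hm Hc [x1 _] _ _.
apply: contrapT => Hno.
have Hx : forall x, exists r : R, 0 < r /\ (H d g (dball d x r) < H d g setT)%E.
  move=> x; apply: contrapT => Hr; apply: Hno; exists x => K [_ [U [Uo Ux UK]]].
  exists (H d g K); split; first exact: htop.
  have [r r0 rU] := Uo x Ux.
  have : (H d g setT <= H d g (dball d x r))%E.
    rewrite leNgt; apply/negP => lt; apply: Hr; exists r; split => //.
  move=> Hle.
  have -> : H d g K = H d g setT.
    apply/eqP; rewrite eq_le; apply/andP; split; first by apply: H_mono.
    apply: le_trans Hle _; apply: H_mono; apply: subset_trans rU UK.
  exact: htop.
pose I := {xr : X * R | 0 < xr.2 /\ (H d g (dball d xr.1 xr.2) < H d g setT)%E}.
pose U := fun i : I => dball d (sval i).1 (sval i).2.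
have cov : forall x, exists i, U i x.
  move=> x; have [r [r0 Hr]] := Hx x.
  exists (exist _ (x, r) (conj r0 Hr)); rewrite /U /dball /=.
  by case: Hm => _ dE _ _; rewrite (proj2 (dE x x) erefl).
have [m [f Hf]] := Hc I U (fun i => @dball_open R X d _ _ Hm) cov.
case: m f Hf => [|m] f Hf; first by have [[]] := Hf x1.
have Hlt := @H_big R X d p g m (fun k => U (f k)) (H d g setT)
  (fun k => proj2 (svalP (f k))).
move: Hlt; apply/negP; rewrite -leNgt.
by apply: H_mono => x _; exact: Hf.
Qed.
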